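(* Let $V$ be a finite-dimensional vector space over a field of characteristic different from $2$ and $b$ a non-degenerate symmetric or alternating bilinear form on $V$. Let $\mathcal{V}$ be a linear subspace of $\mathcal{A}_b$ all of whose elements are nilpotent. Let $x\in V\setminus\{0\}$, $u\in\mathcal{V}$ and $y\in V$ be such that $x\wedge_b y\in\mathcal{V}$. Then $b(u(x),y)=0$.
   Context: An endomorphism $u$ is $b$-alternating if $(x,y)\mapsto b(x,u(y))$ is alternating (vanishes on all $(x,x)$); $\mathcal{A}_b$ is the space of these. For $x,y\in V$, $x\wedge_b y$ is the endomorphism $z\mapsto b(y,z)\,x-b(x,z)\,y$. *)

(* Defs.v *)
From HB Require Import structures.
From mathcomp Require Import all_boot all_order all_algebra.
Set Implicit Arguments. Unset Strict Implicit. Unset Printing Implicit Defensive.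
Import GRing.Theory.
Local Open Scope ring_scope.

Section Defs.
Variables (F : fieldType) (V : vectType F).

Definition bform_bilinear (b : V -> V -> F) : Prop :=
  (forall (a : F) (x x' y : V), b (a *: x + x') y = a * b x y + b x' y) /\
  (forall (a : F) (x y y' : V), b x (a *: y + y') = a * b x y + b x y').

Definition bform_symmetric (b : V -> V -> F) : Prop := forall x y, b x y = b y x.

Definition bform_alternating (b : V -> V -> F) : Prop := forall x, b x x = 0.

Definition bform_nondegenerate (b : V -> V -> F) : Prop :=
  forall x, (forall y, b x y = 0) -> x = 0.

(* u is b-alternating: (x,y) |-> b(x, u y) is alternating *)
Definition b_alternating (b : V -> V -> F) (u : 'End(V)) : Prop :=
  forall x, b x (u x) = 0.

Definition nilpotent_end (u : 'End(V)) : Prop :=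
  exists k : nat, forall z, iter k u z = 0.

(* x /\_b y : z |-> b(y,z) x - b(x,z) y  (linear when b is bilinear) *)
Definition wedge_b (b : V -> V -> F) (x y : V) : 'End(V) :=
  linfun (fun z => b y z *: x - b x z *: y).

End Defs.

(* Main.v *)
Require Import Defs.
From HB Require Import structures.
From mathcomp Require Import all_boot all_order all_algebra.
From mathcomp Require Import ring.
Import GRing.Theory.
Local Open Scope ring_scope.

Lemma tr_nilp (F : fieldType) n (A : 'M[F]_n.+1) k : A ^+ k = 0 -> \tr A = 0.
Proof.
move=> AK.
set P := map_mx (@polyC F) A.
have PK : P ^+ k = 0.
  by rewrite /P -rmorphXn /= AK map_mx0.
have cxy : GRing.comm ('X%:M : 'M[{poly F}]_n.+1) P.
  by rewrite /GRing.comm -!mulmxE scalar_mxC.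
have := subrXX_comm k cxy.
have SX : forall j : nat, (('X%:M : 'M[{poly F}]_n.+1) ^+ j) = ('X ^+ j)%:M.
  move=> j; elim: j => [|j IH]; first done.
  by rewrite !exprS IH -mulmxE -scalar_mxM.
rewrite SX.
  rewrite PK subr0 => /(congr1 determinant).
rewrite -mulmxE det_mulmx det_scalar -/(char_poly_mx A) -/(char_poly A).
move=> E.
have D : char_poly A %| ('X - 0%:P) ^+ (k * n.+1).
  by rewrite polyC0 subr0 exprM E dvdp_mulr.
case/dvdp_exp_XsubCP: D => m _.
rewrite eqp_monic ?char_poly_monic ?monic_exp ?monicXsubC // polyC0 subr0.
move=> /eqP C.
have Hm : m = n.+1.
  by have := size_char_poly A; rewrite C size_polyXn => -[].
have := char_poly_trace A (ltn0Sn n).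
rewrite C Hm coefXn /= eqn_leq ltnn andbF => /esym/eqP; rewrite oppr_eq0 => /eqP.
done.
Qed.

Lemma iter_mulmx (F : fieldType) n (A : 'M[F]_n.+1) k (r : 'rV_n.+1) :
  iter k (fun r => r *m A) r = r *m A ^+ k.
Proof.
elim: k => [|k IH] /=; first by rewrite expr0 mulmx1.
rewrite IH exprSr -mulmxA. done.
Qed.

Lemma tr_nilp2 (F : fieldType) n (A : 'M[F]_n) k :
  (forall r : 'rV_n, iter k (fun r => r *m A) r = 0) -> \tr (A *m A) = 0.
Proof.
case: n A => [|n] A H; first by rewrite /mxtrace big_ord0.
have AK : A ^+ k = 0.
  apply/row_matrixP => i.
  rewrite -[A ^+ k]mul1mx row_mul -iter_mulmx H.
  by apply/rowP=> j; rewrite !mxE.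
apply: (@tr_nilp _ _ _ k).
change ((A * A) ^+ k = 0).
by rewrite -expr2 -exprM mulnC exprM AK expr0n.
Qed.

Section LfunGen.
Variables (K : fieldType) (aT rT : vectType K) (f : aT -> rT) (hf : linear f).
Let f' := f.
HB.instance Definition _ := GRing.isSemilinear.Build K aT rT _ f'
  (GRing.semilinear_linear hf).
Lemma lfunE_gen v : linfun f v = f v.
Proof. exact: (@lfunE _ _ _ f' v). Qed.
End LfunGen.

Theorem mainTheorem12 (F : fieldType) (V : vectType F)
  (hchar : (2%:R : F) != 0)
  (b : V -> V -> F) (hbil : bform_bilinear b)
  (hsym_alt : bform_symmetric b \/ bform_alternating b)
  (hnd : bform_nondegenerate b)
  (W : {vspace 'End(V)})
  (hWalt : forall w, w \in W -> b_alternating b w)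
  (hWnil : forall w, w \in W -> nilpotent_end w)
  (x : V) (hx : x != 0) (u : 'End(V)) (hu : u \in W) (y : V)
  (hxy : wedge_b b x y \in W) :
  b (u x) y = 0.
Proof.
case: hbil => hl hr.
have bDl : forall a c d, b (a + c) d = b a d + b c d.
  by move=> a c d; rewrite -[a]scale1r hl mul1r scale1r.
have bDr : forall a c d, b a (c + d) = b a c + b a d.
  by move=> a c d; rewrite -[c]scale1r hr mul1r scale1r.
have b0r : forall a, b a 0 = 0.
  move=> a; have := bDr a 0 0; rewrite addr0 => /(congr1 (fun t => t - b a 0)).
  by rewrite subrr addrK => /esym.
have bZr : forall a t c, b a (t *: c) = t * b a c.
  by move=> a t c; rewrite -[t *: c]addr0 hr b0r addr0.
have bsum : forall a n (f : 'I_n -> V), b a (\sum_i f i) = \sum_i b a (f i).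
  by move=> a n f; apply: (big_morph (b a) (bDr a) (b0r a)).
have skew : forall f : 'End(V), b_alternating b f ->
    forall z z', b z (f z') = - b z' (f z).
  move=> f hf z z'; have := hf (z + z').
  rewrite linearD /= !bDr !bDl (hf z) (hf z') add0r addr0 => /eqP.
  by rewrite addrC addr_eq0 => /eqP.
pose e := vbasis (fullv : {vspace V}).
have eb : basis_of fullv e := vbasisP fullv.
pose M (f : 'End(V)) := passmx.mxof e e f.
have trsq : forall f, f \in W -> \tr (M f *m M f) = 0.
  move=> f /hWnil [k hk]; apply: (@tr_nilp2 _ _ _ k) => r.
  have -> : iter k (fun r => r *m M f) r = passmx.rVof e (iter k f (passmx.vecof e r)).
    elim: k {hk} => [|k IH] /=; first by rewrite (passmx.vecofK eb).
    by rewrite IH (passmx.rVof_app e eb).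
  rewrite hk; apply/rowP=> i; rewrite !mxE; exact: raddf0.
pose w := wedge_b b x y.
have H1 := trsq _ (memvD hu hxy).
have H2 := trsq _ (memvB hu hxy).
have MD : M (u + w) = M u + M w.
  by have := passmx.mxof_linear e e 1 u w; rewrite !scale1r.
have MB : M (u - w) = M u - M w.
  have := passmx.mxof_linear e e (-1) w u; rewrite !scaleN1r => E.
  by rewrite addrC /M E addrC.
rewrite -/w MD MB in H1 H2.
rewrite !mulmxDl !mulmxDr !mxtraceD in H1.
rewrite !mulmxBl !mulmxBr !raddfB /= in H2.
rewrite [\tr (M w *m M u)]mxtrace_mulC in H1 H2.
have T0 : \tr (M u *m M w) = 0.
  have := congr2 (fun a c => a - c) H1 H2; rewrite /= subrr => E.
  have : 2%:R * (2%:R * \tr (M u *m M w)) = 0 by rewrite -E; move: (\tr (M u *m M u)) (\tr (M u *m M w)) (\tr (M w *m M w)) => p q r; ring.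
  by move/eqP; rewrite !mulf_eq0 (negPf hchar) /= => /eqP.
have TC : \tr (M u *m M w) = \sum_(i < \dim (fullv : {vspace V})) coord e i (w (u e`_i)).
  rewrite /M -(passmx.mxof_comp e e eb) /mxtrace.
  apply: eq_bigr => i _; rewrite !mxE /=.
  by rewrite passmx.vecof_delta comp_lfunE.
have K : forall a z, \sum_(i < \dim (fullv : {vspace V})) b a (u e`_i) * coord e i z = b a (u z).
  move=> a z; rewrite [in RHS](coord_vbasis (memvf z)) linear_sum bsum.
  by apply: eq_bigr => i _; rewrite linearZ /= bZr mulrC.
have TC2 : \tr (M u *m M w) = b y (u x) - b x (u y).
  rewrite TC -K -K -sumrB; apply: eq_bigr => i _.
  rewrite /w /wedge_b lfunE_gen; last first.
    move=> a z1 z2 /=; rewrite !hr !scalerDl scalerBr !scalerA.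
    by rewrite opprD !addrA; congr (_ + _); rewrite addrAC.
  by rewrite linearB /= !linearZ.
have Y : b y (u x) = 0.
  move: T0; rewrite TC2 (skew u (hWalt u hu) x y) opprK => /eqP.
  by rewrite -mulr2n -mulr_natl mulf_eq0 (negPf hchar) => /eqP.
case: hsym_alt => [hs | ha]; first by rewrite hs.
have := ha (u x + y); rewrite !bDl !bDr !ha Y add0r addr0 addr0.
done.
Qed.
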